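(* Let $X$ be a locally compact separable metrizable space and $Z\subseteq X$ compact. Every abstract good coordinate system of $Z$ in the weak sense has a shrinking (which is again an abstract good coordinate system of $Z$ in the weak sense).
   Context: An abstract K-chart of $X$ is a triple $(U,S,\psi)$ where $U$ is a locally compact separable metrizable space, $S\subseteq U$ is closed, and $\psi:S\to X$ is a homeomorphism onto an open subset of $X$. Given abstract K-charts $\mathcal U_i=(U_i,S_i,\psi_i)$ ($i=1,2$), a coordinate change from $\mathcal U_1$ to $\mathcal U_2$ is a pair $(U_{21},\varphi_{21})$ with: (1) $U_{21}\subseteq U_1$ open; (2) $\varphi_{21}:U_{21}\to U_2$ a topological embedding; (3) $S_1\cap U_{21}=\varphi_{21}^{-1}(S_2)$ and $\psi_2\circ\varphi_{21}=\psi_1$ on $S_1\cap U_{21}$; (4) $\psi_1(S_1\cap U_{21})=\psi_1(S_1)\cap\psi_2(S_2)$. An abstract good coordinate system of $Z$ in the weak sense is $(\mathfrak P,\{\mathcal U_{\mathfrak p}\},\{\Phi_{\mathfrak p\mathfrak q}\})$ where: (1) $\mathfrak P$ is a finite partially ordered set; (2) each $\mathcal U_{\mathfrak p}=(U_{\mathfrak p},S_{\mathfrak p},\psi_{\mathfrak p})$ is an abstract K-chart; (3) for $\mathfrak q\le\mathfrak p$, $\Phi_{\mathfrak p\mathfrak q}=(U_{\mathfrak p\mathfrak q},\varphi_{\mathfrak p\mathfrak q})$ is a coordinate change from $\mathcal U_{\mathfrak q}$ to $\mathcal U_{\mathfrak p}$, with $U_{\mathfrak p\mathfrak p}=U_{\mathfrak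 p}$ and $\varphi_{\mathfrak p\mathfrak p}=\mathrm{id}$; (4) if $\mathfrak r\le\mathfrak q\le\mathfrak p$ then $\varphi_{\mathfrak p\mathfrak r}=\varphi_{\mathfrak p\mathfrak q}\circ\varphi_{\mathfrak q\mathfrak r}$ on $\varphi_{\mathfrak q\mathfrak r}^{-1}(U_{\mathfrak p\mathfrak q})\cap U_{\mathfrak p\mathfrak r}$; (5) if $\psi_{\mathfrak p}(S_{\mathfrak p})\cap\psi_{\mathfrak q}(S_{\mathfrak q})\neq\emptyset$ then $\mathfrak p\le\mathfrak q$ or $\mathfrak q\le\mathfrak p$; (6) $\bigcup_{\mathfrak p}\psi_{\mathfrak p}(S_{\mathfrak p})\supseteq Z$. For an open subset $V$ of a separable metrizable space $U$, write $V\Subset U$ if the closure of $V$ in $U$ is compact. For an abstract K-chart $\mathcal U=(U,S,\psi)$ and open $U_0\subseteq U$, $\mathcal U|_{U_0}=(U_0,S\cap U_0,\psi|_{S\cap U_0})$; it is a shrinking of $\mathcal U$ if $U_0\Subset U$. An abstract good coordinate system $(\mathfrak P,\{\mathcal U^0_{\mathfrak p}\},\{\Phi^0_{\mathfrak p\mathfrak q}\})$ of $Z$ in the weak sense (same $\mathfrak P$) is a shrinking of $(\mathfrak P,\{\mathcal U_{\mathfrak p}\},\{\Phi_{\mathfrak p\mathfrak q}\})$ if each $\mathcal U^0_{\mathfrak p}$ is a shrinking of $\mathcal U_{\mathfrak p}$, and for $\mathfrak q\le\mathfrak p$ the domain of $\Phi^0_{\mathfrak p\mathfrak q}$ is an open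 set $\Subset U_{\mathfrak p\mathfrak q}$ and $\varphi^0_{\mathfrak p\mathfrak q}$ is the restriction of $\varphi_{\mathfrak p\mathfrak q}$ to it. *)

(* Defs.v *)
From HB Require Import structures.
From mathcomp Require Import all_boot all_order all_algebra.
From mathcomp Require Import all_classical all_reals all_analysis.
From mathcomp Require Import Rstruct Rstruct_topology.

Set Implicit Arguments.
Unset Strict Implicit.
Unset Printing Implicit Defensive.

Import Order.TTheory GRing.Theory Num.Theory.
Local Open Scope classical_set_scope.
Local Open Scope ring_scope.

Definition metrizable (T : topologicalType) : Prop :=
  exists d : T -> T -> Rdefinitions.R,
    [/\ (forall x y, d x y = 0 <-> x = y),
        (forall x y, d x y = d y x),
        (forall x y z, d x z <= d x y + d y z) &
        (forall A : set T, open A <->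
           (forall x, A x -> exists e : Rdefinitions.R, 0 < e /\ [set y | d x y < e] `<=` A))].

Definition separable (T : topologicalType) : Prop :=
  exists D : set T, countable D /\ dense D.

Definition lcsm (T : topologicalType) : Prop :=
  [/\ locally_compact [set: T], separable T & metrizable T].

(** Subsets [A] of [T] carry the subspace topology via the sigma type
    [set_type A] (MathComp-Analysis, subtype_topology.v). *)
Definition sub_open (T : topologicalType) (U A : set T) : Prop :=
  A `<=` U /\ open [set x : set_type U | A (val x)].

Definition sub_closed (T : topologicalType) (U A : set T) : Prop :=
  A `<=` U /\ closed [set x : set_type U | A (val x)].

Definition relcompact_in (T : topologicalType) (U V : set T) : Prop :=
  V `<=` U /\ compact (closure [set x : set_type U | V (val x)]).

Definition embedding_on (U V : topologicalType) (A : set U) (f : U -> V)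
  : Prop :=
  [/\ {within A, continuous f},
      {in A &, injective f} &
      (forall W : set U, open W ->
         exists W' : set V, open W' /\ f @` (W `&` A) = W' `&` f @` A)].

(** The chart space of a chart is represented as a subset [U] of an
    ambient topological type [T], equipped with the subspace topology
    (for the given system, [U = setT], i.e. the space is [T] itself; for
    a shrinking it is an open subset [U0] of [T]).  The chart is
    [(U, S, psi)]; [psi] is a total function of which only the values
    on [S] matter. *)
Definition is_Kchart (X T : topologicalType) (U S : set T) (psi : T -> X)
  : Prop :=
  [/\ lcsm (set_type U),
      sub_closed U S,
      embedding_on S psi &
      open (psi @` S)].

(** [(U21, phi21)] is a coordinate change from the chart
    [(U1,S1,psi1)] to the chart [(U2,S2,psi2)]; only the values of
    [phi21] on [U21] matter. *)
Definition is_coord_change (X T1 T2 : topologicalType)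
  (U1 S1 : set T1) (psi1 : T1 -> X) (U2 S2 : set T2) (psi2 : T2 -> X)
  (U21 : set T1) (phi21 : T1 -> T2) : Prop :=
  [/\ sub_open U1 U21,
      phi21 @` U21 `<=` U2 /\ embedding_on U21 phi21,
      S1 `&` U21 = U21 `&` phi21 @^-1` S2,
      (forall x, (S1 `&` U21) x -> psi2 (phi21 x) = psi1 x) &
      psi1 @` (S1 `&` U21) = psi1 @` S1 `&` psi2 @` S2].

Definition is_weak_gcs (X : topologicalType) (Z : set X)
  (d : Order.disp_t) (P : finPOrderType d)
  (T : P -> topologicalType)
  (Ud : forall p, set (T p)) (S : forall p, set (T p))
  (psi : forall p, T p -> X)
  (Uc : forall p q : P, set (T q)) (phi : forall p q : P, T q -> T p) : Prop :=
  [/\ (forall p, is_Kchart (Ud p) (S p) (psi p)) /\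
      (forall p q : P, (q <= p)%O ->
         is_coord_change (Ud q) (S q) (psi q) (Ud p) (S p) (psi p)
                         (Uc p q) (phi p q)),
      (forall p, Uc p p = Ud p /\ (forall x, Ud p x -> phi p p x = x)),
      (forall p q r : P, (r <= q)%O -> (q <= p)%O ->
         forall x, Uc q r x -> Uc p q (phi q r x) -> Uc p r x ->
           phi p r x = phi p q (phi q r x)),
      (forall p q : P, psi p @` S p `&` psi q @` S q !=set0 ->
         (p <= q)%O \/ (q <= p)%O) &
      Z `<=` \bigcup_p (psi p @` S p)].

Definition is_shrinking (X : topologicalType) (Z : set X)
  (d : Order.disp_t) (P : finPOrderType d)
  (T : P -> topologicalType) (S : forall p, set (T p))
  (psi : forall p, T p -> X)
  (Uc : forall p q : P, set (T q)) (phi : forall p q : P, T q -> T p)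
  (U0 : forall p, set (T p)) (D0 : forall p q : P, set (T q)) : Prop :=
  [/\ (forall p, open (U0 p) /\ relcompact_in setT (U0 p)),
      (forall p q : P, (q <= p)%O ->
         open (D0 p q) /\ relcompact_in (Uc p q) (D0 p q)) &
      is_weak_gcs Z U0 (fun p => S p `&` U0 p) psi D0 phi].

(* Main.v *)
Require Import Defs.
From HB Require Import structures.
From mathcomp Require Import all_boot all_order all_algebra.
From mathcomp Require Import all_classical all_reals all_analysis.
From mathcomp Require Import Rstruct Rstruct_topology lra.

Set Implicit Arguments.
Unset Strict Implicit.
Unset Printing Implicit Defensive.
Import Order.TTheory GRing.Theory Num.Theory.
Local Open Scope classical_set_scope.

Section ST.
Context {T : topologicalType} (U : set T).

Lemma st_openP (B : set (set_type U)) :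
  open B -> exists W : set T, open W /\ B = set_val @^-1` W.
Proof. by move=> [W oW <-]; exists W. Qed.

Lemma st_open_pre (W : set T) : open W -> open (set_val @^-1` W : set (set_type U)).
Proof. by move=> oW; exists W. Qed.

Lemma st_val_cont : continuous (set_val : set_type U -> T).
Proof. exact: initial_continuous. Qed.

Lemma st_closed_pre (C : set T) : closed C -> closed (set_val @^-1` C : set (set_type U)).
Proof. by move=> cC; apply: preimage_closed => // x _; exact: st_val_cont. Qed.

Lemma st_nbhs (x : set_type U) (B : set (set_type U)) : nbhs x B ->
  exists W : set T, [/\ open W, W (set_val x) & set_val @^-1` W `<=` B].
Proof.
rewrite nbhsE; case=> O1 [oO Ox] OB.
have [W [oW OW]] := st_openP oO; subst O1.
by exists W.
Qed.

Lemma st_compact_pre (C : set T) : compact C -> C `<=` U ->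
  compact (set_val @^-1` C : set (set_type U)).
Proof.
move=> cC CU F PF FC.
have PG : ProperFilter (set_val @ F) by exact: fmap_proper_filter.
have GC : (set_val @ F) C by [].
have [p [Cp clp]] := cC _ PG GC.
have Up : p \in U by apply/mem_set/CU.
pose p' : set_type U := exist _ p Up.
exists p'; split => //.
move=> A B FA /st_nbhs [W [oW Wp WB]].
have GA : (set_val @ F) (set_val @` A).
  have : F (set_val @^-1` (set_val @` A)) by apply: filterS FA => a Aa /=; exists a.
  by [].
have nW : nbhs p W by apply: open_nbhs_nbhs.
have [y [[a Aa <-] Wa]] := clp _ _ GA nW.
by exists a; split => //; exact: WB.
Qed.

Lemma st_compact_img (B : set (set_type U)) : compact B -> compact (set_val @` B).
Proof.
move=> cB; apply: continuous_compact => //.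
apply: continuous_subspaceT; exact: st_val_cont.
Qed.

End ST.

Local Open Scope ring_scope.
Definition is_metric (T : topologicalType) (d : T -> T -> Rdefinitions.R) : Prop :=
    [/\ (forall x y, d x y = 0 <-> x = y),
        (forall x y, d x y = d y x),
        (forall x y z, (d x z <= d x y + d y z)%R) &
        (forall A : set T, open A <->
           (forall x, A x -> exists e : Rdefinitions.R, (0 < e)%R /\ [set y | (d x y < e)%R] `<=` A))].

Local Close Scope ring_scope.
Lemma metrizableP (T : topologicalType) : metrizable T <-> exists d : T -> T -> Rdefinitions.R, is_metric d.
Proof. by []. Qed.

Section Metric.
Local Open Scope ring_scope.
Context {T : topologicalType} (d : T -> T -> Rdefinitions.R) (hd : is_metric d).

Lemma d_ge0 x y : 0 <= d x y.
Proof.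
case: hd => d0 ds dt _.
have := dt x y x; rewrite (proj2 (d0 x x) erefl) (ds y x) => h.
lra.
Qed.

Lemma ball_open x e : open [set y | d x y < e].
Proof.
case: hd => d0 ds dt op; apply/op => y /= hy.
exists (e - d x y); split; first lra.
move=> z /= hz; have := dt x y z; lra.
Qed.

Lemma ball_center x e : 0 < e -> d x x < e.
Proof. by case: hd => d0 _ _ _; rewrite (proj2 (d0 x x) erefl). Qed.

Lemma cball_closed x e : closed [set y | d x y <= e].
Proof.
case: hd => d0 ds dt op.
rewrite -[X in closed X]setCK; apply: open_closedC; apply/op => y /= hy.
have hy' : e < d x y by rewrite ltNge; apply/negP.
exists (d x y - e); split; first lra.
move=> z /= hz; apply/negP; rewrite -ltNge.
have := dt x z y; rewrite (ds z y); lra.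
Qed.

Lemma metric_open_ball (A : set T) x : open A -> A x ->
  exists e, 0 < e /\ [set y | d x y < e] `<=` A.
Proof. by case: hd => _ _ _ op /op; apply. Qed.

Lemma metric_hausdorff : hausdorff_space T.
Proof.
move=> p q hc; apply: contrapT => npq.
have hpq : 0 < d p q.
  rewrite lt_def d_ge0 andbT; apply/eqP => h.
  by apply: npq; case: hd => d0 _ _ _; exact/d0.
have np : nbhs p [set y | d p y < d p q / 2].
  by apply: open_nbhs_nbhs; split; [exact: ball_open | apply: ball_center; lra].
have nq : nbhs q [set y | d q y < d p q / 2].
  by apply: open_nbhs_nbhs; split; [exact: ball_open | apply: ball_center; lra].
have [z [/= h1 h2]] := hc _ _ np nq.
case: hd => _ ds dt _.
have := dt p z q; rewrite (ds z q); lra.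
Qed.

End Metric.

Lemma closure_sub_closed (T : topologicalType) (A C : set T) :
  closed C -> A `<=` C -> closure A `<=` C.
Proof. by move=> cC AC x /(closureS AC); rewrite -(proj1 (closure_id C) cC). Qed.

Definition slc (T : topologicalType) := forall (O : set T) x, open O -> O x ->
  exists V, [/\ open V, V x, compact (closure V) & closure V `<=` O].

Section SetT.
Context {T : topologicalType}.
Definition toT (x : T) : set_type [set: T] := exist _ x (mem_set (I : [set: T] x)).
Lemma toTK (y : set_type [set: T]) : toT (set_val y) = y.
Proof. by apply/val_inj. Qed.
Lemma valtoT x : set_val (toT x) = x. Proof. by []. Qed.

Lemma st_openT (A : set T) : open (set_val @^-1` A : set (set_type [set: T])) -> open A.
Proof.
move=> /st_openP [W [oW E]].
suff -> : A = W by [].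
apply/seteqP; split=> x hx.
- by have : (set_val @^-1` A) (toT x) by []; rewrite E.
- by have : (set_val @^-1` W) (toT x) by []; rewrite -E.
Qed.

Lemma st_closedT (A : set T) : closed (set_val @^-1` A : set (set_type [set: T])) -> closed A.
Proof.
move=> cA; rewrite -[A]setCK; apply: open_closedC; apply: st_openT.
have -> : set_val @^-1` (~` A) = ~` (set_val @^-1` A : set (set_type [set: T])) by [].
exact: closed_openC.
Qed.

Lemma lcsm_setT : lcsm (set_type [set: T]) ->
  [/\ slc T, (exists d, @is_metric T d), separable T & hausdorff_space T].
Proof.
case=> lc [D' [cD' dD']] [d hd].
pose d' := fun x y : T => d (toT x) (toT y).
have hd' : is_metric d'.
  case: hd => d0 ds dt op; split.
  - move=> x y; rewrite /d' d0; split; last by move=> ->.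
    by move=> h; have := congr1 (@set_val T [set: T]) h.
  - by move=> x y; rewrite /d' ds.
  - by move=> x y z; rewrite /d' dt.
  - move=> A; split.
    + move=> oA x Ax.
      have /op/(_ (toT x) Ax) [e [e0 he]] : open (set_val @^-1` A : set (set_type [set: T])) by exact: st_open_pre.
      by exists e; split => // y hy; exact: (he (toT y)).
    + move=> hA; apply: st_openT; apply/op => x' Ax'.
      have [e [e0 he]] := hA _ Ax'.
      exists e; split => // y' hy'.
      by apply: he; rewrite /= /d' !toTK.
have hT : hausdorff_space T by exact: (metric_hausdorff hd').
have wlc : forall x : T, exists W C, [/\ open W, W x, compact C & W `<=` C].
  move=> x; have [K hK [cK _]] := lc (toT x) I.
  have nK : nbhs (toT x) K.
    move: hK; rewrite /within /=; apply: filterS => y; exact.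
  have [W [oW Wx WK]] := st_nbhs nK.
  exists W, (set_val @` K); split => //; first exact: st_compact_img.
  by move=> y Wy; exists (toT y) => //; exact: WK.
split => //.
- move=> O x oO Ox.
  have [W [C [oW Wx cC WC]]] := wlc x.
  have [e [e0 he]] := metric_open_ball hd' (openI oO oW) (conj Ox Wx).
  have hcl : closure [set y | (d' x y < e / 2)%R] `<=` [set y | (d' x y < e)%R].
    move=> y hy.
    have : [set y | (d' x y <= e / 2)%R] y.
      have hc := cball_closed hd' (x:=x) (e:=(e / 2)%R).
      have hs : [set y | (d' x y < e / 2)%R] `<=` [set y | (d' x y <= e / 2)%R].
        by move=> z /= h; lra.
      exact: (closure_sub_closed hc hs hy).
    by rewrite /=; lra.
  exists [set y | (d' x y < e / 2)%R]; split.
  + exact: (ball_open hd').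
  + by apply: (ball_center hd'); lra.
  + apply: (subclosed_compact (@closed_closure _ _) cC).
    by move=> y /hcl /he [] _ /WC.
  + by move=> y /hcl /he [].
- exists d'; exact: hd'.
- exists (set_val @` D'); split.
  + move: cD' => /pcard_injP [f finj]; apply/pcard_injP.
    exists (fun y => f (toT y)) => y1 y2 /[!inE] -[a Da <-] -[b Db <-].
    by rewrite !toTK => /(finj a b); rewrite !inE => /(_ Da Db) ->.
  + move=> O [x Ox] oO.
    have ne : (set_val @^-1` O : set (set_type [set: T])) !=set0 by exists (toT x).
    have oO' : open (set_val @^-1` O : set (set_type [set: T])) by exact: st_open_pre.
    have [a [Oa Da]] := dD' _ ne oO'.
    by exists (set_val a); split => //; exists a.
Qed.
End SetT.

Lemma lcsm_open (T : topologicalType) (U : set T) : slc T ->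
  (exists d, @is_metric T d) -> separable T -> open U -> lcsm (set_type U).
Proof.
move=> hs [d hd] [D [cD dD]] oU; split.
- move=> x _.
  have [V [oV Vx cV VU]] := hs U (set_val x) oU (set_valP x).
  exists (set_val @^-1` closure V).
    rewrite /within /=.
    have nV : nbhs x (set_val @^-1` V : set (set_type U)).
      by apply: open_nbhs_nbhs; split => //; exact: st_open_pre.
    by apply: filterS nV => y Vy _; exact: subset_closure.
  split.
    have := st_compact_pre (U:=U) cV VU. exact.
  have := st_closed_pre (U:=U) (@closed_closure _ V). exact.
- exists (set_val @^-1` D); split.
  + move: cD => /pcard_injP [f finj]; apply/pcard_injP.
    exists (fun y => f (set_val y)) => a b /[!inE] Da Db /(finj _ _).
    by rewrite !inE => /(_ Da Db) /val_inj.
  + move=> O [y Oy] /st_openP [W [oW E]]; subst O.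
    have ne : (W `&` U) !=set0 by exists (set_val y); split => //; exact: set_valP.
    have [z [[Wz Uz] Dz]] := dD _ ne (openI oW oU).
    exists (exist _ z (mem_set Uz)); split => //.
- pose d' := fun a b : set_type U => d (set_val a) (set_val b).
  exists d'.
  case: hd => d0 ds dt op; split.
  + move=> a b; rewrite /d' d0; split; first exact: val_inj.
    by move=> ->.
  + by move=> a b; rewrite /d' ds.
  + by move=> a b c; rewrite /d' dt.
  + move=> B; split.
    * move=> /st_openP [W [oW E]]; subst B => a Wa.
      have [e [e0 he]] := (proj1 (op W) oW) _ Wa.
      by exists e; split => // b hb; exact: he.
    * move=> hB.
      have oB : open (set_val @` B).
        apply/op => y [b Bb <-].
        have [e1 [e10 he1]] := hB b Bb.
        have [e2 [e20 he2]] := (proj1 (op U) oU) _ (set_valP b).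
        have [e [e0 [h1 h2]]] : exists e, (0 < e /\ e <= e1 /\ e <= e2)%R.
          by case: (lerP e1 e2) => h; [exists e1 | exists e2]; (split; [|split]) => //; exact: ltW.
        exists e; split => // z /= hz.
        have Uz : U z by apply: he2; rewrite /=; lra.
        exists (exist _ z (mem_set Uz)) => //.
        by apply: he1; rewrite /d' /=; lra.
      have -> : B = set_val @^-1` (set_val @` B).
        apply/seteqP; split => a; first by move=> Ba; exists a.
        by case=> b Bb /val_inj <-.
      exact: st_open_pre.
Qed.

Definition ptd (T : topologicalType) (x : T) : Type := T.
HB.instance Definition _ (T : topologicalType) (x : T) := Topological.copy (@ptd T x) T.
HB.instance Definition _ (T : topologicalType) (x : T) := isPointed.Build (@ptd T x) x.
Lemma compact_cover_nt (T : topologicalType) (K : set T) (x : T) :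
  compact K -> @cover_compact T K.
Proof.
move=> cK. have := (@compact_cover (@ptd T x)). move=> e.
have : @compact (@ptd T x) K by exact: cK.
rewrite e. move=> h. exact: h.
Qed.

Lemma finite_union (T : topologicalType) (I : eqType) (f : I -> set T) (O : set T) (s : seq I) :
  (forall i, open (f i)) -> (forall i, compact (closure (f i))) -> (forall i, closure (f i) `<=` O) ->
  exists W, [/\ open W, compact (closure W), closure W `<=` O & forall i, i \in s -> f i `<=` W].
Proof.
move=> ho hc hO; elim: s => [|a s [W [oW cW WO hW]]].
  exists set0; split => //; first exact: open0.
  - by rewrite closure0; exact: compact0.
  - by rewrite closure0.
exists (f a `|` W); split.
- exact: openU.
- rewrite closureU; exact: compactU.
- by rewrite closureU => x [/hO|/WO].
- move=> i; rewrite in_cons => /orP [/eqP -> | /hW h] x hx; [by left | by right; apply: h].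
Qed.

Lemma cover_refine (T : topologicalType) (K O : set T) : slc T -> compact K -> open O ->
  K `<=` O -> exists W, [/\ open W, K `<=` W, compact (closure W) & closure W `<=` O].
Proof.
move=> hs cK oO KO.
case: (pselect (K !=set0)) => [[k Kk]|nK]; last first.
  exists set0; split => //; first exact: open0.
  - by move=> x Kx; apply: nK; exists x.
  - by rewrite closure0; exact: compact0.
  - by rewrite closure0.
have hf : forall x : T, exists V : set T,
    [/\ open V, compact (closure V), closure V `<=` O & (K x -> V x)].
  move=> x; case: (pselect (K x)) => Kx.
    have [V [oV Vx cV VO]] := hs O x oO (KO x Kx).
    by exists V; split.
  exists set0; split => //; first exact: open0.
  - by rewrite closure0; exact: compact0.
  - by rewrite closure0.
have [f hf'] := choice hf.
have cc := compact_cover_nt k cK.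
have h1 : forall i, K i -> open (f i) by move=> i _; case: (hf' i).
have h2 : K `<=` cover K f by move=> x Kx; exists x => //; case: (hf' x) => _ _ _; apply.
have [D' sD' KD'] := cc T K f h1 h2.
have g1 : forall i, open (f i) by move=> i; case: (hf' i).
have g2 : forall i, compact (closure (f i)) by move=> i; case: (hf' i).
have g3 : forall i, closure (f i) `<=` O by move=> i; case: (hf' i).
have [W [oW cW WO hW]] := finite_union (finmap.enum_fset D') g1 g2 g3.
exists W; split => //.
move=> x /KD' [i Di fi]; exact: (hW i Di).
Qed.

Lemma open_within_pre (T V : topologicalType) (A : set T) (f : T -> V) (O : set V) :
  open A -> {within A, continuous f} -> open O -> open (A `&` f @^-1` O).
Proof.
move=> oA cf oO; rewrite continuous_open_subspace // in cf.
exact: (proj1 (continuous_inP _ oA) cf _ oO).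
Qed.

Lemma compact_pre_within (T V : topologicalType) (A : set T) (f : T -> V) (C : set V) :
  compact A -> {within A, continuous f} -> closed C -> compact (A `&` f @^-1` C).
Proof.
move=> cA cf cC F PF FAC.
have FA : F A by apply: filterS FAC => y [].
have [p [Ap clp]] := cA F PF FA.
exists p; split => //; split => //.
apply: cC => B nB.
have := (proj1 (subspace_continuousP A f) cf) p Ap B nB.
rewrite /= /within /= => N.
have [y [[Ay Cy] Ny]] := clp _ _ FAC N.
by exists (f y); split => //; exact: Ny.
Qed.

Lemma embedding_sub (T V : topologicalType) (A B : set T) (f : T -> V) :
  embedding_on A f -> B `<=` A -> embedding_on B f.
Proof.
case=> hc hi h3 BA; split.
- exact: continuous_subspaceW hc.
- move=> x y /set_mem xB /set_mem yB; apply: hi; apply/mem_set; exact: BA.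
- move=> W oW; have [W' [oW' E]] := h3 W oW.
  exists W'; split => //; apply/seteqP; split.
  + move=> _ [x [Wx Bx] <-]; split; last by exists x.
    have : (f @` (W `&` A)) (f x) by exists x => //; split => //; exact: BA.
    by rewrite E => -[].
  + move=> y [W'y [b Bb fb]]; rewrite -fb in W'y *.
    have : (W' `&` f @` A) (f b) by split => //; exists b => //; exact: BA.
    rewrite -E => -[c [Wc Ac] fcb].
    have cb : c = b by apply: hi => //; apply/mem_set => //; exact: BA.
    by exists b => //; split => //; rewrite -cb.
Qed.

Lemma relcompact_of (T : topologicalType) (U V : set T) :
  V `<=` U -> compact (closure V) -> closure V `<=` U -> relcompact_in U V.
Proof.
move=> VU cV cVU; split => //.
have h : closure (set_val @^-1` V : set (set_type U)) `<=` set_val @^-1` closure V.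
  have c1 := st_closed_pre (U:=U) (@closed_closure _ V).
  apply: (closure_sub_closed c1).
  by move=> x hx; exact: subset_closure.
exact: (subclosed_compact (@closed_closure _ _) (st_compact_pre cV cVU) h).
Qed.

Local Open Scope classical_set_scope.

Theorem proposition3p3 (X : topologicalType) (Z : set X)
  (hX : lcsm X) (hZ : compact Z)
  (d : Order.disp_t) (P : finPOrderType d)
  (T : P -> topologicalType) (S : forall p, set (T p))
  (psi : forall p, T p -> X)
  (Uc : forall p q : P, set (T q)) (phi : forall p q : P, T q -> T p) :
  is_weak_gcs Z (fun p => [set: T p]) S psi Uc phi ->
  exists (U0 : forall p, set (T p)) (D0 : forall p q : P, set (T q)),
    is_shrinking Z S psi Uc phi U0 D0.
Proof.
move=> [[hK hC] hid hcoc hcomp hcov].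
have hT : forall p, [/\ slc (T p), (exists d, @is_metric (T p) d), separable (T p) & hausdorff_space (T p)].
  by move=> p; case: (hK p) => l _ _ _; exact: lcsm_setT.
have hXh : hausdorff_space X.
  by case: hX => _ _ [dX hdX]; exact: (metric_hausdorff hdX).
have cS : forall p, closed (S p).
  by move=> p; case: (hK p) => _ [_ cl] _ _; exact: st_closedT.
have emb : forall p, embedding_on (S p) (psi p).
  by move=> p; case: (hK p).
have oS : forall p, open (psi p @` S p).
  by move=> p; case: (hK p).
have injS : forall p, forall x y, S p x -> S p y -> psi p x = psi p y -> x = y.
  move=> p x y Sx Sy e; case: (emb p) => _ hi _; apply: hi => //; exact: mem_set.
have oimg : forall p (V : set (T p)), open V -> open (psi p @` (S p `&` V)).
  move=> p V oV; case: (emb p) => _ _ h3; have [W' [oW' E]] := h3 V oV.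
  by rewrite setIC E; apply: openI => //; exact: oS.
have [U0 hU0] : exists U0 : forall p, set (T p),
    (forall p, open (U0 p) /\ compact (closure (U0 p))) /\
    Z `<=` \bigcup_p (psi p @` (S p `&` U0 p)).
  case: (pselect (Z !=set0)) => [[z0 Zz0]|nZ]; last first.
    exists (fun p => set0); split.
      move=> p; split; first exact: open0.
      by rewrite closure0; exact: compact0.
    by move=> z Zz; exfalso; apply: nZ; exists z.
  have hV : forall p, exists Vp : X -> set (T p), forall z,
      [/\ open (Vp z), compact (closure (Vp z)) &
          forall x, S p x -> psi p x = z -> Vp z x].
    move=> p.
    have h : forall z, exists V : set (T p), [/\ open V, compact (closure V) &
          forall x, S p x -> psi p x = z -> V x].
      move=> z; case: (pselect (exists x, S p x /\ psi p x = z)) => [[x [Sx pxz]]|nx].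
        case: (hT p) => hs _ _ _.
        have [V [oV Vx cV _]] := hs setT x openT I.
        exists V; split => // x' Sx' px'z.
        by rewrite (injS p x' x Sx' Sx); [exact: Vx | rewrite px'z pxz].
      exists set0; split; first exact: open0.
      - by rewrite closure0; exact: compact0.
      - by move=> x Sx pxz; exfalso; apply: nx; exists x.
    by have [f hf] := choice h; exists f.
  pose Vp := fun p => proj1_sig (cid (hV p)).
  have hVp : forall p z, [/\ open (Vp p z), compact (closure (Vp p z)) &
          forall x, S p x -> psi p x = z -> Vp p z x].
    by move=> p z; exact: (proj2_sig (cid (hV p)) z).
  pose g := fun z => \bigcup_(p in [set: P]) psi p @` (S p `&` Vp p z).
  have og : forall z, open (g z).
    move=> z; apply: bigcup_open => p _; apply: oimg; by case: (hVp p z).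
  have Zg : Z `<=` cover Z g.
    move=> z Zz; exists z => //.
    have [p _ [x Sx pxz]] := hcov z Zz.
    exists p => //; exists x => //; split => //.
    by case: (hVp p z) => _ _; apply.
  have [D' sD' ZD'] := compact_cover_nt z0 hZ (fun z _ => og z) Zg.
  have hW : forall p, exists W : set (T p), [/\ open W, compact (closure W),
      closure W `<=` setT & forall i, i \in finmap.enum_fset D' -> Vp p i `<=` W].
    move=> p; apply: finite_union => i; by case: (hVp p i).
  exists (fun p => proj1_sig (cid (hW p))); split.
    by move=> p; case: (proj2_sig (cid (hW p))).
  move=> z /ZD' [i Di [p _ [x [Sx Vx] pxz]]].
  exists p => //; exists x => //; split => //.
  by case: (proj2_sig (cid (hW p))) => _ _ _ h; apply: (h i Di).

have oU0 : forall p, open (U0 p) by move=> p; case: (hU0.1 p).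
have cU0 : forall p, compact (closure (U0 p)) by move=> p; case: (hU0.1 p).
have covU0 := hU0.2.
have oUc : forall p q, (q <= p)%O -> open (Uc p q).
  by move=> p q hqp; case: (hC p q hqp) => [[_ o] _ _ _ _]; exact: st_openT.
have embc : forall p q, (q <= p)%O -> embedding_on (Uc p q) (phi p q).
  by move=> p q hqp; case: (hC p q hqp) => _ [_ e] _ _ _.
have eqS : forall p q, (q <= p)%O -> S q `&` Uc p q = Uc p q `&` phi p q @^-1` S p.
  by move=> p q hqp; case: (hC p q hqp).
have hpsi : forall p q, (q <= p)%O -> forall x, (S q `&` Uc p q) x -> psi p (phi p q x) = psi q x.
  by move=> p q hqp; case: (hC p q hqp).
have himg : forall p q, (q <= p)%O -> psi q @` (S q `&` Uc p q) = psi q @` S q `&` psi p @` S p.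
  by move=> p q hqp; case: (hC p q hqp).
have inUc : forall p q, (q <= p)%O -> forall x y, S q x -> S p y -> psi q x = psi p y -> Uc p q x.
  move=> p q hqp x y Sx Sy e.
  have : (psi q @` S q `&` psi p @` S p) (psi q x) by split; [exists x | exists y].
  rewrite -himg // => -[x' [Sx' Ux'] e'].
  by rewrite -(injS q x' x Sx' Sx e').
have inS : forall p q, (q <= p)%O -> forall x, S q x -> Uc p q x -> S p (phi p q x).
  move=> p q hqp x Sx Ux.
  have : (S q `&` Uc p q) x by split.
  by rewrite eqS // => -[_ h].
have hW2 : forall p q : P, exists W : set (T q), [/\ open W, (p = q -> W = setT) &
   ((q <= p)%O -> p <> q ->
     [/\ (S q `&` closure (U0 q)) `&` psi q @^-1` (psi p @` (S p `&` closure (U0 p))) `<=` W,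
         compact (closure W) & closure W `<=` Uc p q])].
  move=> p q.
  case: (pselect ((q <= p)%O /\ p <> q)) => [[hqp npq]|nc]; last first.
    exists setT; split => //; first exact: openT.
    by move=> h1 h2; exfalso; apply: nc.
  have cA : compact (S q `&` closure (U0 q)).
    by rewrite setIC; apply: compact_closedI; [exact: cU0 | exact: cS].
  have cfq : {within S q `&` closure (U0 q), continuous psi q}.
    by apply: (continuous_subspaceW (B := S q)) ; [by move=> x [] | by case: (emb q)].
  have cfp : {within S p `&` closure (U0 p), continuous psi p}.
    by apply: (continuous_subspaceW (B := S p)) ; [by move=> x [] | by case: (emb p)].
  have cAp : compact (S p `&` closure (U0 p)).
    by rewrite setIC; apply: compact_closedI; [exact: cU0 | exact: cS].
  have clC : closed (psi p @` (S p `&` closure (U0 p))).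
    by apply: compact_closed => //; exact: continuous_compact.
  have cK := compact_pre_within cA cfq clC.
  have KU : (S q `&` closure (U0 q)) `&` psi q @^-1` (psi p @` (S p `&` closure (U0 p))) `<=` Uc p q.
    move=> x [[Sx _] [y [Sy _] e]].
    exact: (inUc p q hqp x y Sx Sy (esym e)).
  case: (hT q) => hs _ _ _.
  have [W [oW KW cW WU]] := cover_refine hs cK (oUc p q hqp) KU.
  exists W; split; [exact: oW | move=> e; case: (npq e) | by move=> _ _; split].
pose Wf := fun p q => proj1_sig (cid (hW2 p q)).
have hWf : forall p q : P, [/\ open (Wf p q), (p = q -> Wf p q = setT) &
   ((q <= p)%O -> p <> q ->
     [/\ (S q `&` closure (U0 q)) `&` psi q @^-1` (psi p @` (S p `&` closure (U0 p))) `<=` Wf p q,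
         compact (closure (Wf p q)) & closure (Wf p q) `<=` Uc p q])].
  by move=> p q; exact: (proj2_sig (cid (hW2 p q))).
pose D0 := fun p q => U0 q `&` (Uc p q `&` phi p q @^-1` U0 p) `&` Wf p q.
have hDpp : forall p, D0 p p = U0 p.
  move=> p; apply/seteqP; split => x; first by case=> [[]].
  move=> Ux; split; last by case: (hWf p p) => _ /(_ erefl) ->.
  split => //; split; first by rewrite (hid p).1.
  by rewrite /= (hid p).2.
have oD0 : forall p q, (q <= p)%O -> open (D0 p q).
  move=> p q hqp; apply: openI; last by case: (hWf p q).
  apply: openI => //; apply: open_within_pre => //; first exact: oUc.
  by case: (embc p q hqp).
have cD0 : forall p q, (q <= p)%O -> compact (closure (D0 p q)) /\ closure (D0 p q) `<=` Uc p q.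
  move=> p q hqp; case: (pselect (p = q)) => [e|npq].
    subst q; rewrite hDpp (hid p).1; split => //.
  case: (hWf p q) => _ _ /(_ hqp npq) [_ cW WU].
  have sub : closure (D0 p q) `<=` closure (Wf p q) by apply: closureS => x [].
  split; last exact: subset_trans sub WU.
  exact: (subclosed_compact (@closed_closure _ _) cW sub).
exists U0, D0; split.
- move=> p; split => //; apply: relcompact_of => //.
- move=> p q hqp; split; first exact: oD0.
  have [c1 c2] := cD0 p q hqp.
  apply: relcompact_of => //.
  by move=> x [[_ [h _]] _].
- split.
  + split.
    * move=> p; split.
      -- by case: (hT p) => hs hm hsep _; exact: lcsm_open.
      -- split; first by move=> x [].
         have -> : [set x : set_type (U0 p) | (S p `&` U0 p) (val x)] = set_val @^-1` S p.
           apply/seteqP; split => x /=; first by case.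
           by move=> Sx; split => //; exact: set_valP.
         exact: st_closed_pre.
      -- by apply: embedding_sub (emb p) _ => x [].
      -- exact: oimg.
    * move=> p q hqp; split.
      -- split; first by move=> x [[]].
         exact: st_open_pre (oD0 p q hqp).
      -- split; first by move=> _ [x [[_ [_ h]] _] <-].
         by apply: embedding_sub (embc p q hqp) _ => x [[_ []]].
      -- apply/seteqP; split => x.
         ++ move=> [[Sx Ux] Dx]; split => //.
            case: Dx => [[_ [Ucx U0x]] _]; split => //.
            exact: inS.
         ++ move=> [Dx [Spx U0px]]; split => //; split => //; last by case: Dx => [[]].
            have : (Uc p q `&` phi p q @^-1` S p) x by split => //; case: Dx => [[_ []]].
            by rewrite -eqS // => -[].
      -- move=> x [[Sx _] [[_ [Ucx _]] _]].
         exact: hpsi.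
      -- apply/seteqP; split.
         ++ move=> _ [x [[Sx U0x] Dx] <-]; split; first by exists x.
            case: Dx => [[_ [Ucx U0px]] _].
            exists (phi p q x); first by split => //; exact: inS.
            exact: hpsi.
         ++ move=> _ [[x [Sx U0x] <-] [y [Sy U0y] e]].
            have Ucx := inUc p q hqp x y Sx Sy (esym e).
            have Spx := inS p q hqp x Sx Ucx.
            have phxy : phi p q x = y.
              by apply: (injS p) => //; rewrite hpsi.
            exists x => //; split => //; split; first by split => //; split => //; move: U0y; rewrite -phxy.
            case: (pselect (p = q)) => [epq|npq].
              by case: (hWf p q) => _ /(_ epq) ->.
            case: (hWf p q) => _ _ /(_ hqp npq) [KW _ _].
            apply: KW; split; first by split => //; exact: subset_closure.
            exists y => //; split => //; exact: subset_closure.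
  + move=> p; split; first exact: hDpp.
    by move=> x _; exact: (hid p).2.
  + move=> p q r hrq hqp x [[_ [Ux _]] _] [[_ [Ux' _]] _] [[_ [Ux'' _]] _].
    exact: hcoc.
  + move=> p q [y [[x [Sx _] e1] [x' [Sx' _] e2]]].
    by apply: hcomp; exists y; split; [exists x | exists x'].
  + exact: covU0.
Qed.
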